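(* Assume the family $\{\mathbf M_\theta\}_{\theta\in\mathcal I}$ of expectation matrices is good with respect to $\nu$, the process is uniformly allowable with constant $\alpha>0$, and there is $M<\infty$ with $\frac{\partial^2 f_\theta^{(k)}}{\partial s_j\partial s_i}(\mathbf 1)<M$ for all $\theta\in\mathcal I$, $i,j,k\in[N]$. Assume $\lambda>0$ and let $0<\rho<1$ with $\rho e^{\lambda}>1$. For $\theta\in\mathcal I$ set $\mathbf g_\theta(\mathbf s)=\mathbf 1-\rho\,\mathbf M_\theta(\mathbf 1-\mathbf s)$. Then there exists $\delta>0$ such that for all $\theta\in\mathcal I$ and all $\mathbf s\in[0,1]^N$ with $\max_{j\in[N]}(1-s_j)\le\delta$, we have $\mathbf g_\theta(\mathbf s)\ge\mathbf f_\theta(\mathbf s)$ componentwise.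
   Context: $N\ge2$, $\mathcal I$ countable, $\Sigma=\mathcal I^{\mathbb N}$, $\nu$ a shift-invariant ergodic probability measure on $\Sigma$; $[N]=\{0,\dots,N-1\}$; $\mathbf 1$ the all-one vector. For $\theta\in\mathcal I$, $\mathbf f_\theta=(f_\theta^{(0)},\dots,f_\theta^{(N-1)})$ with $f_\theta^{(i)}(\mathbf s)=\sum_{\mathbf z\in\mathbb N_0^N}f_\theta^{(i)}[\mathbf z]\mathbf s^{\mathbf z}$ pgfs on $\mathbb N_0^N$; $\mathbf M_\theta(i,k)=\partial f_\theta^{(i)}/\partial s_k(\mathbf 1)$ (finite), $\mathbf M_\theta(\mathbf 1-\mathbf s)$ is matrix–vector product. Allowable: each row and column has a positive entry. For nonnegative $\mathbf B$: $\|\mathbf B\|$ = sum of entries, $\|\mathbf B\|_1$ = max column sum, $(\mathbf B)_*$ = min column sum. Good: all $\mathbf M_\theta$ allowable, $\int|\log\|\mathbf M_{\theta_1}\|_1|d\nu+\int|\log(\mathbf M_{\theta_1})_*|d\nu<\infty$, and some word $(\theta_1,\dots,\theta_n)$ of positive $\nu$-cylinder measure has $\mathbf M_{\theta_1}\cdots\mathbf M_{\theta_n}$ strictly positive. $\lambda=\lim_n\frac1n\log\|\mathbf M_{\theta_1}\cdots\mathbf M_{\theta_n}\|$ ($\nu$-a.s. constant). Uniformly allowable with constant $\alpha$: $\inf\{\sum_{\mathbf w\in\mathbb N_0^N:\,w_i\ne0}f_\theta^{(k)}[\mathbf w]:\theta\in\mathcal I,\ k,i\in[N],\ \mathbf M_\theta(k,i)>0\}>\alpha$.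 *)

(* Defs.v *)
From HB Require Import structures.
From mathcomp Require Import all_boot all_order all_algebra.
From mathcomp Require Import all_classical all_reals all_analysis.
Set Implicit Arguments. Unset Strict Implicit. Unset Printing Implicit Defensive.
Import Order.TTheory GRing.Theory Num.Theory.
Import numFieldNormedType.Exports.
Local Open Scope classical_set_scope.
Local Open Scope ring_scope.

Definition cyl (I : Type) (w : seq I) : set (nat -> I) :=
  [set om | forall k : nat, (k < size w)%N -> om k = nth (om k) w k].

Definition cylinders (I : Type) : set (set (nat -> I)) :=
  [set C | exists w : seq I, C = cyl w].

(* Sigma = I^N, measurable sets = sigma-algebra generated by cylinders
   (= product sigma-algebra of the discrete sigma-algebras on I) *)
Definition Sigma (I : pointedType) := g_sigma_algebraType (@cylinders I).

Definition shift (I : Type) (om : nat -> I) : nat -> I := fun n => om n.+1.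

Definition shift_invariant (I : pointedType) (R : realType)
  (nu : probability (Sigma I) R) : Prop :=
  forall A : set (Sigma I), measurable A -> nu (@shift I @^-1` A) = nu A.

Definition ergodic (I : pointedType) (R : realType)
  (nu : probability (Sigma I) R) : Prop :=
  forall A : set (Sigma I), measurable A -> @shift I @^-1` A = A ->
    nu A = 0%E \/ nu A = 1%E.

(* coef : I -> 'I_N -> {ffun 'I_N -> nat} -> R ;  coef th k z = f_th^{(k)}[z] *)

Definition is_pgf_coef (N : nat) (R : realType)
  (c : {ffun 'I_N -> nat} -> R) : Prop :=
  (forall z, 0 <= c z) /\ (\esum_(z in [set: {ffun 'I_N -> nat}]) (c z)%:E = 1%E).

Definition pgf_eval (N : nat) (R : realType)
  (c : {ffun 'I_N -> nat} -> R) (s : 'I_N -> R) : R :=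
  fine (\esum_(z in [set: {ffun 'I_N -> nat}]) (c z * \prod_(i < N) s i ^+ z i)%:E).

(* d f / d s_i (1) = sum_z f[z] z_i  (extended real, possibly +oo) *)
Definition pgf_d1 (N : nat) (R : realType)
  (c : {ffun 'I_N -> nat} -> R) (i : 'I_N) : \bar R :=
  \esum_(z in [set: {ffun 'I_N -> nat}]) (c z * (z i)%:R)%:E.

(* d^2 f / d s_j d s_i (1) = sum_z f[z] z_i (z_j - [i = j]) *)
Definition pgf_d2 (N : nat) (R : realType)
  (c : {ffun 'I_N -> nat} -> R) (i j : 'I_N) : \bar R :=
  \esum_(z in [set: {ffun 'I_N -> nat}])
     (c z * (z i)%:R * ((z j)%:R - (i == j)%:R))%:E.

Definition expmx (N : nat) (R : realType)
  (c : 'I_N -> {ffun 'I_N -> nat} -> R) : 'M[R]_N :=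
  \matrix_(k, i) fine (pgf_d1 (c k) i).

Definition allowable (N : nat) (R : realType) (B : 'M[R]_N) : Prop :=
  (forall k, exists i, 0 < B k i) /\ (forall i, exists k, 0 < B k i).

Definition mx_sum (N : nat) (R : realType) (B : 'M[R]_N) : R :=
  \sum_(k < N) \sum_(i < N) B k i.

Definition mx_norm1 (N : nat) (R : realType) (B : 'M[R]_N) : R :=
  \big[Num.max/0]_(j < N) \sum_(i < N) B i j.

Definition mx_mincol (N : nat) (R : realType) (B : 'M[R]_N) : R :=
  fine (\big[Order.min/+oo%E]_(j < N) (\sum_(i < N) B i j)%:E).

Definition mx_pos (N : nat) (R : realType) (B : 'M[R]_N) : Prop :=
  forall k i, 0 < B k i.

Definition mx_word (N : nat) (R : realType) (I : Type)
  (M : I -> 'M[R]_N) (w : seq I) : 'M[R]_N :=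
  foldr (fun th B => M th *m B) 1%:M w.

Definition good (N : nat) (R : realType) (I : pointedType)
  (nu : probability (Sigma I) R) (M : I -> 'M[R]_N) : Prop :=
  [/\ forall th, allowable (M th),
      nu.-integrable [set: Sigma I]
        (fun om : Sigma I => (`| ln (mx_norm1 (M (om 0%N))) |)%:E),
      nu.-integrable [set: Sigma I]
        (fun om : Sigma I => (`| ln (mx_mincol (M (om 0%N))) |)%:E) &
      exists w : seq I, (0 < nu (cyl w))%E /\ mx_pos (mx_word M w)].

Definition lyapunov (N : nat) (R : realType) (I : pointedType)
  (nu : probability (Sigma I) R) (M : I -> 'M[R]_N) (lam : R) : Prop :=
  {ae nu, forall om : Sigma I,
     (fun n : nat => (n.+1%:R)^-1 *
        ln (mx_sum (mx_word M [seq om k | k <- iota 0 n.+1])))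
     @ \oo --> lam}.

Definition unif_allowable (N : nat) (R : realType) (I : Type)
  (c : I -> 'I_N -> {ffun 'I_N -> nat} -> R) (alpha : R) : Prop :=
  exists2 beta : R, alpha < beta &
    forall th k i, 0 < expmx (c th) k i ->
      (beta%:E <= \esum_(w in [set w : {ffun 'I_N -> nat} | w i != 0%N]) (c th k w)%:E)%E.

(* Main.v *)
Require Import Defs.
From HB Require Import structures.
From mathcomp Require Import all_boot all_order all_algebra.
From mathcomp Require Import all_classical all_reals all_analysis.
Import Order.TTheory GRing.Theory Num.Theory.
Import numFieldNormedType.Exports.
Local Open Scope classical_set_scope.
Local Open Scope ring_scope.
From mathcomp Require Import ring lra.
Lemma esumZ (R : realType) (T : choiceType) (r : R) (a : T -> \bar R) :
  0 <= r -> (forall x, (0 <= a x)%E) ->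
  \esum_(x in [set: T]) (r%:E * a x)%E = (r%:E * \esum_(x in [set: T]) a x)%E.
Proof.
move=> r0 a0; rewrite /esum -ereal_supZl//; last first.
  by apply/set0P; exists (\sum_(x \in set0) a x)%E; exists set0 => //; exact: fsets_set0.
congr ereal_sup; apply/seteqP; split => x /=.
  move=> [A [finA AT] <-]; exists (\sum_(x \in A) a x)%E; first by exists A.
  by rewrite !fsbig_finite// ge0_sume_distrr.
move=> [y [A [finA AT] <-] <-]; exists A => //.
by rewrite !fsbig_finite// ge0_sume_distrr.
Qed.

Lemma esum_term_le (R : realType) (T : choiceType) (a : T -> \bar R) x :
  (forall x, (0 <= a x)%E) -> (a x <= \esum_(x in [set: T]) a x)%E.
Proof.
move=> a0; apply: esum_ge; exists [set x]; first by split => //; exact: finite_set1.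
by rewrite fsbig_set1.
Qed.
Definition Inv {R : realType} (d p S n : R) :=
  [/\ 0 <= S, 0 <= n, 1 - S <= p & p <= 1 - S + d * (n - 1) * S].

Lemma Inv_step (R : realType) (d s p S n : R) :
  0 <= s <= 1 -> 1 - s <= d -> Inv d p S n -> Inv d (s * p) ((1 - s) + S) (1 + n).
Proof.
move=> /andP[s0 s1] sd [S0 n0 lo hi].
have u0 : 0 <= 1 - s by lra.
have d0 : 0 <= d by lra.
split; [lra|lra| |].
- have := ler_wpM2l s0 lo. nra.
- have h1 : (1 - s) * (1 - S) <= (1 - s) * p by apply: ler_wpM2l.
  have h2 : (1 - s) * S <= d * S by apply: ler_wpM2r.
  have h3 : 0 <= d * n * (1 - s) by rewrite mulr_ge0 // mulr_ge0.
  have h4 : 0 <= d * (1 - s) by rewrite mulr_ge0.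
  nra.
Qed.

Lemma Inv_pow (R : realType) (d s q S n : R) k :
  0 <= s <= 1 -> 1 - s <= d -> Inv d q S n ->
  Inv d (s ^+ k * q) (k%:R * (1 - s) + S) (k%:R + n).
Proof.
move=> hs sd hq; elim: k => [|k IH]; first by rewrite expr0 mul1r !add0r mul0r add0r.
rewrite exprS -mulrA.
have := @Inv_step _ _ _ _ _ _ hs sd IH.
rewrite -natr1 mulrDl mul1r. congr (Inv _ _ _ _) ; lra.
Qed.

Lemma Inv_prod (R : realType) (N : nat) (d : R) (s : 'I_N -> R) (z : 'I_N -> nat) (r : seq 'I_N) :
  (forall j, 0 <= s j <= 1) -> (forall j, 1 - s j <= d) ->
  Inv d (\prod_(i <- r) s i ^+ z i) (\sum_(i <- r) (z i)%:R * (1 - s i))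
        (\sum_(i <- r) (z i)%:R).
Proof.
move=> hs sd; elim: r => [|i r IH].
  rewrite !big_nil; split; lra.
rewrite !big_cons; exact: (@Inv_pow _ _ _ _ _ _ _ (hs i) (sd i) IH).
Qed.

Lemma natr_sq_ge0 (R : realType) (n : nat) : 0 <= (n%:R : R) * (n%:R - 1).
Proof.
case: n => [|n]; first by rewrite mul0r.
by rewrite -natr1 addrK mulr_ge0.
Qed.

Theorem lemma5p2 (R : realType) (N : nat) (I : pointedType)
  (c : I -> 'I_N -> {ffun 'I_N -> nat} -> R)
  (nu : probability (Sigma I) R) (alpha Mb lam rho : R) :
  (2 <= N)%N ->
  countable [set: I] ->
  shift_invariant nu -> ergodic nu ->
  (forall th k, is_pgf_coef (c th k)) ->
  (forall th k i, (pgf_d1 (c th k) i < +oo)%E) ->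
  good nu (fun th => expmx (c th)) ->
  0 < alpha -> unif_allowable c alpha ->
  (forall th k i j, (pgf_d2 (c th k) i j < Mb%:E)%E) ->
  lyapunov nu (fun th => expmx (c th)) lam ->
  0 < lam ->
  0 < rho -> rho < 1 -> 1 < rho * expR lam ->
  exists2 delta : R, 0 < delta &
    forall (th : I) (s : 'I_N -> R),
      (forall j, 0 <= s j <= 1) ->
      (forall j, 1 - s j <= delta) ->
      forall k : 'I_N,
        pgf_eval (c th k) s
          <= 1 - rho * \sum_(i < N) expmx (c th) k i * (1 - s i).
Proof.
move=> N2 _ _ _ pgf d1lt _ alpha0 [beta alphabeta Hbeta] d2lt _ _ rho0 rho1 _.
have N0 : 0 < (N%:R : R) by rewrite ltr0n (leq_trans _ N2).
have Mb1 : 0 < `|Mb| + 1 by rewrite ltr_pwDr.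
set delta := (1 - rho) * alpha / (N%:R * (`|Mb| + 1)).
have delta0 : 0 < delta.
  by rewrite /delta divr_gt0 ?mulr_gt0 // subr_gt0.
have hdel : delta * (N%:R * (`|Mb| + 1)) = (1 - rho) * alpha.
  by rewrite /delta mulfVK // mulf_neq0 // ?gt_eqF // lt0r_neq0.
exists delta => // th s hs hd k.
have [a0 a1] := pgf th k.
pose a := c th k.
pose M i := fine (pgf_d1 a i).
pose D i j := fine (pgf_d2 a i j).
have d1ge0 i : (0 <= pgf_d1 a i)%E.
  by apply: esum_ge0 => z _; rewrite lee_fin mulr_ge0.
have d1E i : pgf_d1 a i = (M i)%:E.
  by rewrite /M fineK // ge0_fin_numE // d1lt.
have zz z i j : 0 <= ((z i)%:R : R) * ((z j)%:R - (i == j)%:R).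
  case: (eqVneq i j) => [->|_]; first exact: natr_sq_ge0.
  by rewrite subr0 mulr_ge0.
have d2ge0 i j : (0 <= pgf_d2 a i j)%E.
  by apply: esum_ge0 => z _; rewrite lee_fin -mulrA mulr_ge0.
have d2E i j : pgf_d2 a i j = (D i j)%:E.
  by rewrite /D fineK // ge0_fin_numE // (lt_trans (d2lt _ _ _ _)) ?ltry.
pose P (z : {ffun 'I_N -> nat}) := \prod_(i < N) s i ^+ z i.
have P01 z : 0 <= P z <= 1.
  rewrite /P prodr_ge0 ?prodr_ile1 // => i _; last by case/andP: (hs i) => *; rewrite exprn_ge0.
  by case/andP: (hs i) => *; rewrite exprn_ge0 ?exprn_ile1.
have key z : a z * P z + \sum_(i < N) (1 - s i) * (a z * (z i)%:R)
    <= a z + \sum_(i < N) \sum_(j < N)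
          (delta * (1 - s i)) * (a z * (z i)%:R * ((z j)%:R - (i == j)%:R)).
  have [_ _ _ hi] := @Inv_prod R N delta s z (index_enum 'I_N) hs hd.
  set S := \sum_(i < N) (z i)%:R * (1 - s i).
  set n := \sum_(i < N) ((z i)%:R : R).
  have e1 : \sum_(i < N) (1 - s i) * (a z * (z i)%:R) = a z * S.
    by rewrite /S mulr_sumr; apply: eq_bigr => i _; ring.
  have e2 : \sum_(i < N) \sum_(j < N)
          (delta * (1 - s i)) * (a z * (z i)%:R * ((z j)%:R - (i == j)%:R))
         = delta * a z * (n - 1) * S.
    rewrite /S mulr_sumr; apply: eq_bigr => i _.
    rewrite -mulr_sumr -mulr_sumr sumrB.
    have -> : \sum_(j < N) ((i == j)%:R : R) = 1.
      rewrite (bigD1 i) //= eqxx big1 ?addr0 // => j.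
      by rewrite eq_sym => /negbTE ->.
    rewrite -/n; ring.
  rewrite e1 e2.
  have := ler_wpM2l (a0 z) hi.
  rewrite /P /a => HH; rewrite -/S -/n in HH; nra.
have EL : (\esum_(z in [set: {ffun 'I_N -> nat}])
      (a z * P z + \sum_(i < N) (1 - s i) * (a z * (z i)%:R))%:E
    = \esum_(z in [set: {ffun 'I_N -> nat}]) (a z * P z)%:E
      + (\sum_(i < N) (1 - s i) * M i)%:E)%E.
  rewrite (eq_esum (b := fun z => (a z * P z)%:E +
       \sum_(i < N) (1 - s i)%:E * (a z * (z i)%:R)%:E)%E); last first.
    by move=> z _; rewrite EFinD -sumEFin; congr (_ + _)%E; apply: eq_bigr => i _; rewrite EFinM.
  rewrite esumD; last 2 first.
  - by move=> z _; rewrite lee_fin mulr_ge0 //; case/andP: (P01 z).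
  - move=> z _; apply: sume_ge0 => i _; rewrite -EFinM lee_fin mulr_ge0 ?mulr_ge0 //.
    by rewrite subr_ge0; case/andP: (hs i).
  rewrite esum_sum; last first.
    move=> z i _ _; rewrite -EFinM lee_fin mulr_ge0 ?mulr_ge0 //.
    by rewrite subr_ge0; case/andP: (hs i).
  congr (_ + _)%E; rewrite -sumEFin; apply: eq_bigr => i _.
  rewrite esumZ; last 2 first.
  - by rewrite subr_ge0; case/andP: (hs i).
  - by move=> z; rewrite lee_fin mulr_ge0.
  by rewrite -/(pgf_d1 a i) d1E EFinM.
have ti0 i : 0 <= 1 - s i by rewrite subr_ge0; case/andP: (hs i).
have ER : (\esum_(z in [set: {ffun 'I_N -> nat}])
      (a z + \sum_(i < N) \sum_(j < N)
          (delta * (1 - s i)) * (a z * (z i)%:R * ((z j)%:R - (i == j)%:R)))%:E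
    = 1 + (\sum_(i < N) \sum_(j < N) (delta * (1 - s i)) * D i j)%:E)%E.
  rewrite (eq_esum (b := fun z => (a z)%:E +
       \sum_(i < N) \sum_(j < N) (delta * (1 - s i))%:E *
           (a z * (z i)%:R * ((z j)%:R - (i == j)%:R))%:E)%E); last first.
    move=> z _; rewrite EFinD -sumEFin; congr (_ + _)%E; apply: eq_bigr => i _.
    by rewrite -sumEFin; apply: eq_bigr => j _; rewrite EFinM.
  have t0 z i j : (0 <= (delta * (1 - s i))%:E *
           (a z * (z i)%:R * ((z j)%:R - (i == j)%:R))%:E)%E.
    rewrite -EFinM lee_fin; apply: mulr_ge0; first by rewrite mulr_ge0 // ltW.
    by rewrite -mulrA mulr_ge0.
  rewrite esumD; last 2 first.
  - by move=> z _; rewrite lee_fin.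
  - by move=> z _; apply: sume_ge0 => i _; apply: sume_ge0 => j _.
  rewrite a1 esum_sum; last by move=> z i _ _; apply: sume_ge0 => j _.
  congr (_ + _)%E; rewrite -sumEFin; apply: eq_bigr => i _.
  rewrite esum_sum; last by move=> z j _ _.
  rewrite -sumEFin; apply: eq_bigr => j _.
  rewrite esumZ; last 2 first.
  - by rewrite mulr_ge0 // ltW.
  - by move=> z; rewrite lee_fin -mulrA mulr_ge0.
  by rewrite -/(pgf_d2 a i j) d2E EFinM.
have EP : \esum_(z in [set: {ffun 'I_N -> nat}]) (a z * P z)%:E = (pgf_eval a s)%:E.
  rewrite /pgf_eval fineK // ge0_fin_numE; last first.
    by apply: esum_ge0 => z _; rewrite lee_fin mulr_ge0 //; case/andP: (P01 z).
  apply: (@le_lt_trans _ _ 1%E); last exact: ltry.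
  rewrite -a1; apply: le_esum => z _; rewrite lee_fin ler_piMr //.
  by case/andP: (P01 z).
have main : pgf_eval a s + \sum_(i < N) (1 - s i) * M i
    <= 1 + \sum_(i < N) \sum_(j < N) (delta * (1 - s i)) * D i j.
  rewrite -lee_fin EFinD -EP -EL EFinD -ER; apply: le_esum => z _.
  by rewrite lee_fin key.
have M0 i : 0 <= M i by rewrite /M fine_ge0.
have bound : \sum_(i < N) \sum_(j < N) (delta * (1 - s i)) * D i j
    <= (1 - rho) * \sum_(i < N) (1 - s i) * M i.
  rewrite mulr_sumr; apply: ler_sum => i _.
  have [Mi0|Mipos] := eqVneq (M i) 0.
    have z0 z : a z * (z i)%:R = 0.
      apply/eqP; rewrite eq_le mulr_ge0 // andbT -lee_fin -Mi0 -d1E.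
      apply: (@esum_term_le _ _ (fun z => (a z * (z i)%:R)%:E) z) => y.
      by rewrite lee_fin mulr_ge0.
    rewrite Mi0 mulr0 mulr0 big1 // => j _.
    have -> : D i j = 0.
      rewrite /D /pgf_d2 esum1 // => z _; by rewrite z0 mul0r.
    by rewrite mulr0.
  have Mpos : 0 < M i by rewrite lt0r Mipos M0.
  have hb := Hbeta th k i.
  rewrite mxE -/a -/(M i) in hb.
  have := hb Mpos => {}hb.
  have Mbeta : beta <= M i.
    rewrite -lee_fin -d1E; apply: (le_trans hb).
    rewrite esum_mkcond; apply: le_esum => z _.
    case: ifP => [|_]; last by rewrite lee_fin mulr_ge0.
    rewrite in_setE /= => nz; rewrite lee_fin ler_peMr // ler1n lt0n //.
  have Dle j : D i j <= `|Mb| + 1.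
    have := d2lt th k i j; rewrite -/a d2E lte_fin => h.
    by apply: ltW; apply: (lt_le_trans h); rewrite (le_trans (ler_norm _)) // lerDl.
  apply: (@le_trans _ _ (\sum_(j < N) (delta * (1 - s i)) * (`|Mb| + 1))).
    apply: ler_sum => j _; apply: ler_wpM2l => //; rewrite mulr_ge0 // ltW //.
  rewrite sumr_const card_ord -mulr_natr.
  have e : delta * (1 - s i) * (`|Mb| + 1) * N%:R = (1 - rho) * alpha * (1 - s i).
    by rewrite -hdel; ring.
  rewrite e; have h1 : 0 <= (1 - rho) * (1 - s i) by rewrite mulr_ge0 // subr_ge0 ltW.
  have := ler_wpM2l h1 (ltW (lt_le_trans alphabeta Mbeta)); nra.
have -> : \sum_(i < N) expmx (c th) k i * (1 - s i) = \sum_(i < N) (1 - s i) * M i.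
  by apply: eq_bigr => i _; rewrite mxE mulrC.
rewrite -/a; lra.
Qed.
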